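(* Let $n_1,n_2\ge 3$, let $\Gamma=C_{n_1}\Box C_{n_2}$ where all edges of the cycle $C_{n_1}$ have length $\ell_1>0$ and all edges of $C_{n_2}$ have length $\ell_2>0$, with $G=G_{n_1}\times G_{n_2}$ acting by the rotations. For $s\in\{0,\dots,n_1-1\}$, $t\in\{0,\dots,n_2-1\}$ put $a_s=\omega_1^s+\omega_1^{-s}=2\cos(2\pi s/n_1)$, $b_t=\omega_2^t+\omega_2^{-t}=2\cos(2\pi t/n_2)$ and $$\Sigma_{s,t}(k)=1-\tfrac12 a_s e^{ik\ell_1}-\tfrac12 b_t e^{ik\ell_2}+\tfrac12 a_s e^{ik(\ell_1+2\ell_2)}+\tfrac12 b_t e^{ik(2\ell_1+\ell_2)}-e^{2ik(\ell_1+\ell_2)}.$$ Then for every real $k\neq0$, $k^2$ is an eigenvalue of $\mathscr H_{s,t}$ if and only if $\Sigma_{s,t}(k)=0$.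
   Context: $C_n$ denotes the cycle graph on $n$ vertices $w_0,\dots,w_{n-1}$ with edges $w_jw_{j+1}$ (indices mod $n$); the cyclic group $G_n=\langle g\rangle$ acts by the rotation $g w_j=w_{j+1}$, mapping edges isometrically onto edges. The Cartesian product metric graph $\Gamma_{n_1}\Box\Gamma_{n_2}$ has vertex set $V(\Gamma_{n_1})\times V(\Gamma_{n_2})$; $(u,v)$ and $(u',v')$ are joined iff either $u=u'$ and $v\sim v'$ in $\Gamma_{n_2}$ (length of $vv'$), or $v=v'$ and $u\sim u'$ in $\Gamma_{n_1}$ (length of $uu'$). $G=G_{n_1}\times G_{n_2}$, $G_{n_i}=\langle g_i\rangle$, acts by $(g_1^\kappa,g_2^\iota)(u,v)=(g_1^\kappa u,g_2^\iota v)$, extended isometrically to edges; $(T_hf)(y)=f(hy)$ on $L^2(\Gamma)$ (functions square integrable on each edge). $\omega_i=e^{2\pi i/n_i}$; $\tau_{s,t}(g_1^\kappa,g_2^\iota)=\omega_1^{s\kappa}\omega_2^{t\iota}$; $\mathcal F_{s,t}=\{f\in L^2(\Gamma):T_hf=\overline{\tau_{s,t}(h)}f\ \forall h\in G\}$. Standard vertex conditions at a vertex $v$: continuity of $f$ at $v$ and $\sum_{e\ni v}f'|_e(v)=0$ with derivatives pointing into the edges. $\mathscr H=-d^2/dx^2$ on each edge with domain the functions that are $H^2$ on each edge and satisfy the standard conditions at all vertices. $\mathscr H_{s,t}$ is the restriction of $\mathscr H$ to $\mathcal D(\mathscr H)\cap\mathcal F_{s,t}$, a self-adjoint operator in $\mathcal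 F_{s,t}$. *)

(* Defs.v *)
From Stdlib Require Import Reals Arith.
From Coquelicot Require Import Coquelicot.
Open Scope R_scope.

Definition Cexpi (theta : R) : C := (cos theta, sin theta).

(* Vertices: (j1, j2) with j1 < n1, j2 < n2.
   Edges: for each vertex (j1,j2),
     - the "horizontal" edge (d = true) from (j1,j2) to ((j1+1) mod n1, j2), length l1;
     - the "vertical"   edge (d = false) from (j1,j2) to (j1, (j2+1) mod n2), length l2.
   The edge (d,j1,j2) is identified with [0, len d], coordinate 0 at (j1,j2).
   A function on Gamma is  f : bool -> nat -> nat -> R -> C, where only the
   values f d j1 j2 x with j1 < n1, j2 < n2, 0 <= x <= len d matter. *)

Definition edge_len (l1 l2 : R) (d : bool) : R := if d then l1 else l2.

Definition prev (n j : nat) : nat := ((j + n - 1) mod n)%nat.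
Definition next (n j : nat) : nat := ((j + 1) mod n)%nat.

(* f is, on every edge, a (classical, hence H^2) solution of -f'' = lam f:
   f' and f'' are its first and second derivatives (the edge functions are
   taken C^2 on all of R; every H^2 solution on [0,len] extends so). *)
Definition edge_eigen (n1 n2 : nat) (l1 l2 lam : R)
  (f f' f'' : bool -> nat -> nat -> R -> C) : Prop :=
  forall d j1 j2, (j1 < n1)%nat -> (j2 < n2)%nat ->
    (forall x, is_derive (f d j1 j2) x (f' d j1 j2 x)) /\
    (forall x, is_derive (f' d j1 j2) x (f'' d j1 j2 x)) /\
    (forall x, 0 <= x <= edge_len l1 l2 d ->
        Copp (f'' d j1 j2 x) = Cmult (RtoC lam) (f d j1 j2 x)).

(* Incident edges: horizontal (true,j1,j2) at x=0, horizontal (true,prev j1,j2) at x=l1,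
   vertical (false,j1,j2) at x=0, vertical (false,j1,prev j2) at x=l2.
   Derivatives pointing into the edges: f'(0) at a start, -f'(len) at an end. *)
Definition standard_conditions (n1 n2 : nat) (l1 l2 : R)
  (f f' : bool -> nat -> nat -> R -> C) : Prop :=
  forall j1 j2, (j1 < n1)%nat -> (j2 < n2)%nat ->
    f true (prev n1 j1) j2 l1 = f true j1 j2 0 /\
    f false j1 j2 0 = f true j1 j2 0 /\
    f false j1 (prev n2 j2) l2 = f true j1 j2 0 /\
    Cplus (Cplus (f' true j1 j2 0) (Copp (f' true (prev n1 j1) j2 l1)))
          (Cplus (f' false j1 j2 0) (Copp (f' false j1 (prev n2 j2) l2))) = RtoC 0.

Definition tau (n1 n2 s t kappa iota : nat) : C :=
  Cexpi (2 * PI * INR (s * kappa) / INR n1 + 2 * PI * INR (t * iota) / INR n2).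

(* f in F_{s,t}: T_h f = conj(tau_{s,t}(h)) f for all h in G, where
   (T_h f)(y) = f(h y) and h = (g1^kappa, g2^iota) maps the edge (d,j1,j2)
   isometrically (orientation preserved) onto the edge (d, j1+kappa, j2+iota). *)
Definition in_F (n1 n2 s t : nat) (f : bool -> nat -> nat -> R -> C) : Prop :=
  forall kappa iota d j1 j2 x, (kappa < n1)%nat -> (iota < n2)%nat ->
    (j1 < n1)%nat -> (j2 < n2)%nat ->
    f d ((j1 + kappa) mod n1)%nat ((j2 + iota) mod n2)%nat x
    = Cmult (Cconj (tau n1 n2 s t kappa iota)) (f d j1 j2 x).

Definition is_eigenvalue_Hst (n1 n2 : nat) (l1 l2 : R) (s t : nat) (lam : R) : Prop :=
  exists f f' f'' : bool -> nat -> nat -> R -> C,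
    edge_eigen n1 n2 l1 l2 lam f f' f'' /\
    standard_conditions n1 n2 l1 l2 f f' /\
    in_F n1 n2 s t f /\
    (exists d j1 j2 x, (j1 < n1)%nat /\ (j2 < n2)%nat /\
       0 <= x <= edge_len l1 l2 d /\ f d j1 j2 x <> RtoC 0).

Definition a_coef (n1 s : nat) : R := 2 * cos (2 * PI * INR s / INR n1).

Definition Sigma (n1 n2 : nat) (l1 l2 : R) (s t : nat) (k : R) : C :=
  let a := a_coef n1 s in
  let b := a_coef n2 t in
  Cplus (Cplus (Cplus (Cplus (Cplus (RtoC 1)
    (Copp (Cmult (RtoC (a / 2)) (Cexpi (k * l1)))))
    (Copp (Cmult (RtoC (b / 2)) (Cexpi (k * l2)))))
    (Cmult (RtoC (a / 2)) (Cexpi (k * (l1 + 2 * l2)))))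
    (Cmult (RtoC (b / 2)) (Cexpi (k * (2 * l1 + l2)))))
    (Copp (Cexpi (2 * k * (l1 + l2)))).

(* Main.v *)
Require Import Defs.
From Stdlib Require Import Reals Arith.
From Coquelicot Require Import Coquelicot.
From Stdlib Require Import Lra Lia Classical.
Open Scope R_scope.

Section Sec1.

Lemma isd_fst (f : R -> C) x l : is_derive f x l -> is_derive (fun y => fst (f y)) x (fst l).
Proof.
  intro H. unfold is_derive in *.
  apply (filterdiff_comp' f (fun t : C_R_NormedModule => fst t) x _ (fun t : C_R_NormedModule => fst t) H).
  apply filterdiff_linear. apply (@is_linear_fst R_AbsRing R_NormedModule R_NormedModule).
Qed.

Lemma isd_snd (f : R -> C) x l : is_derive f x l -> is_derive (fun y => snd (f y)) x (snd l).
Proof.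
  intro H. unfold is_derive in *.
  apply (filterdiff_comp' f (fun t : C_R_NormedModule => snd t) x _ (fun t : C_R_NormedModule => snd t) H).
  apply filterdiff_linear. apply (@is_linear_snd R_AbsRing R_NormedModule R_NormedModule).
Qed.

Lemma isd_pair (u w : R -> R) x du dw :
  is_derive u x du -> is_derive w x dw -> is_derive (fun y => (u y, w y) : C) x (du, dw).
Proof.
  intros Hu Hw. unfold is_derive in *.
  apply (filterdiff_comp'_2 u w (fun a b => (a, b) : C_R_NormedModule) x _ _ (fun a b => (a,b) : C_R_NormedModule) Hu Hw).
  eapply filterdiff_ext_lin.
  eapply filterdiff_ext. 2: apply filterdiff_id.
  intros [a b]; reflexivity.
  intros [a b]; reflexivity.
Qed.

Lemma isd_C (f : R -> C) x l :
  is_derive (fun y => fst (f y)) x (fst l) -> is_derive (fun y => snd (f y)) x (snd l) ->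
  is_derive f x l.
Proof.
  intros H1 H2. destruct l as [l1 l2].
  eapply is_derive_ext. 2: apply (isd_pair _ _ _ _ _ H1 H2).
  intro t. simpl. destruct (f t); reflexivity.
Qed.

Lemma isd_unique (f : R -> C) x l1 l2 : is_derive f x l1 -> is_derive f x l2 -> l1 = l2.
Proof.
  intros H1 H2.
  pose proof (is_derive_unique _ _ _ (isd_fst _ _ _ H1)) as A1.
  pose proof (is_derive_unique _ _ _ (isd_fst _ _ _ H2)) as A2.
  pose proof (is_derive_unique _ _ _ (isd_snd _ _ _ H1)) as B1.
  pose proof (is_derive_unique _ _ _ (isd_snd _ _ _ H2)) as B2.
  destruct l1, l2; simpl in *. f_equal; congruence.
Qed.

Lemma isd_Cmult_l (c : C) (g : R -> C) x l :
  is_derive g x l -> is_derive (fun y => Cmult c (g y)) x (Cmult c l).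
Proof.
  intro H. pose proof (isd_fst _ _ _ H) as H1. pose proof (isd_snd _ _ _ H) as H2.
  destruct c as [c1 c2]. apply isd_C; simpl.
  - pose proof (is_derive_minus _ _ _ _ _ (is_derive_scal _ _ c1 _ H1) (is_derive_scal _ _ c2 _ H2)) as K.
    exact K.
  - pose proof (is_derive_plus _ _ _ _ _ (is_derive_scal _ _ c1 _ H2) (is_derive_scal _ _ c2 _ H1)) as K.
    exact K.
Qed.

End Sec1.

Section Sec2.

Lemma ode_uniq (k l : R) (u du ddu : R -> R) : k <> 0 ->
 (forall x, is_derive u x (du x)) -> (forall x, is_derive du x (ddu x)) ->
 (forall x, 0 <= x <= l -> ddu x = - (k^2 * u x)) ->
 forall x, 0 <= x <= l ->
   u x = cos (k*x) * u 0 + sin (k*x) / k * du 0 /\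
   du x = - k * sin (k*x) * u 0 + cos (k*x) * du 0.
Proof.
  intros hk Hu Hdu Hode.
  set (u0 := u 0). set (v0 := du 0).
  set (E := fun y => (du y - (- k * sin (k*y) * u0 + cos (k*y) * v0))^2
                     + k^2 * (u y - (cos (k*y) * u0 + sin (k*y) / k * v0))^2).
  assert (HE : forall y, is_derive E y (2 * (du y - (- k * sin (k*y) * u0 + cos (k*y) * v0)) * (ddu y + k^2 * u y))).
  { intro y. unfold E. auto_derive.
    - repeat split; try (eexists; apply Hu); try (eexists; apply Hdu).
    - replace (Derive (fun x : R => u x) y) with (du y) by (symmetry; apply is_derive_unique; apply Hu).
      replace (Derive (fun x : R => du x) y) with (ddu y) by (symmetry; apply is_derive_unique; apply Hdu).
      field. exact hk. }
  intros x Hx.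
  assert (Ex : E x = 0).
  { destruct (MVT_gen E 0 x (fun y => 2 * (du y - (- k * sin (k*y) * u0 + cos (k*y) * v0)) * (ddu y + k^2 * u y))) as [c [Hc Hc2]].
    - intros; apply HE.
    - intros y _. apply derivable_continuous_pt. eexists. apply is_derive_Reals. apply HE.
    - rewrite Rmin_left in Hc by lra. rewrite Rmax_right in Hc by lra.
      rewrite Hode in Hc2 by lra.
      assert (E0 : E 0 = 0).
      { unfold E. rewrite Rmult_0_r, cos_0, sin_0. fold u0 v0. field. exact hk. }
      lra. }
  unfold E in Ex.
  assert (hk2 : 0 < k^2) by (apply pow2_gt_0; exact hk).
  set (a := du x - (- k * sin (k*x) * u0 + cos (k*x) * v0)) in Ex.
  set (b := u x - (cos (k*x) * u0 + sin (k*x) / k * v0)) in Ex.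
  assert (a = 0 /\ b = 0) as [Ha Hb].
  { assert (0 <= a^2) by apply pow2_ge_0. assert (0 <= b^2) by apply pow2_ge_0.
    assert (a^2 = 0) by nra. assert (b^2 = 0) by nra.
    split; nra. }
  unfold a, b in *. split; lra.
Qed.

End Sec2.

Section Sec3.

Lemma Cexpi_mult a b : Cmult (Cexpi a) (Cexpi b) = Cexpi (a+b).
Proof. unfold Cexpi, Cmult; simpl. rewrite cos_plus, sin_plus. f_equal; ring. Qed.

Lemma Cconj_Cexpi a : Cconj (Cexpi a) = Cexpi (-a).
Proof. unfold Cexpi, Cconj; simpl. rewrite cos_neg, sin_neg. reflexivity. Qed.

Lemma Cexpi_period a m : Cexpi (a + 2 * INR m * PI) = Cexpi a.
Proof. unfold Cexpi. rewrite cos_period, sin_period. reflexivity. Qed.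

Lemma Cexpi_neq0 a : Cexpi a <> RtoC 0.
Proof.
  unfold Cexpi. intro H. injection H as H1 H2.
  pose proof (sin2_cos2 a). unfold Rsqr in *. rewrite H1, H2 in *. lra.
Qed.

Lemma ph_mod (n1 n2 s t kappa iota j1 j2 : nat) : (0 < n1)%nat -> (0 < n2)%nat ->
  Cconj (tau n1 n2 s t ((j1 + kappa) mod n1) ((j2 + iota) mod n2))
  = Cmult (Cconj (tau n1 n2 s t kappa iota)) (Cconj (tau n1 n2 s t j1 j2)).
Proof.
  intros h1 h2. unfold tau. rewrite !Cconj_Cexpi, Cexpi_mult.
  pose proof (Nat.div_mod_eq (j1 + kappa) n1) as E1.
  pose proof (Nat.div_mod_eq (j2 + iota) n2) as E2.
  set (q1 := ((j1 + kappa) / n1)%nat) in *. set (r1 := ((j1 + kappa) mod n1)%nat) in *.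
  set (q2 := ((j2 + iota) / n2)%nat) in *. set (r2 := ((j2 + iota) mod n2)%nat) in *.
  apply (f_equal INR) in E1. apply (f_equal INR) in E2.
  rewrite plus_INR, plus_INR, mult_INR in E1, E2.
  assert (n1r : INR n1 <> 0) by (apply not_0_INR; lia).
  assert (n2r : INR n2 <> 0) by (apply not_0_INR; lia).
  symmetry. rewrite <- (Cexpi_period _ (s * q1 + t * q2)).
  f_equal. rewrite !mult_INR, plus_INR, !mult_INR.
  replace (INR r1) with (INR j1 + INR kappa - INR n1 * INR q1) by lra.
  replace (INR r2) with (INR j2 + INR iota - INR n2 * INR q2) by lra.
  field. split; assumption.
Qed.

Lemma ph_P (n1 n2 s t : nat) : (1 <= n1)%nat -> (1 <= n2)%nat ->
  Cconj (tau n1 n2 s t (n1 - 1) 0) = Cexpi (2 * PI * INR s / INR n1).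
Proof.
  intros h1 h2. unfold tau. rewrite Cconj_Cexpi.
  rewrite <- (Cexpi_period _ s).
  assert (n1r : INR n1 <> 0) by (apply not_0_INR; lia).
  assert (n2r : INR n2 <> 0) by (apply not_0_INR; lia).
  f_equal. rewrite !mult_INR, minus_INR by exact h1. simpl. field. split; assumption.
Qed.

Lemma ph_Q (n1 n2 s t : nat) : (1 <= n1)%nat -> (1 <= n2)%nat ->
  Cconj (tau n1 n2 s t 0 (n2 - 1)) = Cexpi (2 * PI * INR t / INR n2).
Proof.
  intros h1 h2. unfold tau. rewrite Cconj_Cexpi.
  rewrite <- (Cexpi_period _ t).
  assert (n1r : INR n1 <> 0) by (apply not_0_INR; lia).
  assert (n2r : INR n2 <> 0) by (apply not_0_INR; lia).
  f_equal. rewrite !mult_INR, minus_INR by exact h2. simpl. field. split; assumption.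
Qed.

Lemma ph_neq0 n1 n2 s t j1 j2 : Cconj (tau n1 n2 s t j1 j2) <> RtoC 0.
Proof. unfold tau. rewrite Cconj_Cexpi. apply Cexpi_neq0. Qed.

Lemma Cexpi_rel a : Cmult (RtoC (2 * cos a)) (Cexpi a) = Cplus (Cmult (Cexpi a) (Cexpi a)) (RtoC 1).
Proof.
  unfold Cexpi, Cmult, Cplus, RtoC; simpl. pose proof (sin2_cos2 a). unfold Rsqr in *.
  f_equal; nra.
Qed.

End Sec3.

Section Sec4.

Lemma Cmul_cancel (x y : C) : (x * y = 0)%C -> y <> 0%C -> x = 0%C.
Proof. intros H hy. replace x with (x * y / y)%C by (field; auto). rewrite H. field. auto. Qed.

Local Open Scope C_scope.

Lemma alg_fwd (P Q A B D c1 s1 c2 s2 a b : C) :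
 a*P = P*P + 1 -> b*Q = Q*Q + 1 -> c1*c1+s1*s1 = 1 -> c2*c2+s2*s2 = 1 ->
 P*(c1*A + s1*B) = A -> Q*(c2*A + s2*D) = A ->
 B - P*(c1*B - s1*A) + D - Q*(c2*D - s2*A) = 0 ->
 (A <> 0 \/ B <> 0 \/ D <> 0) -> P <> 0 -> Q <> 0 ->
 2*(s1*c2 + c1*s2) - a*s2 - b*s1 = 0.
Proof.
  intros ha hb e1 e2 H1 H2 H3 Hnz hP hQ.
  set (m11 := P*c1 - 1). set (m12 := P*s1). set (m21 := Q*c2 - 1). set (m23 := Q*s2).
  set (m31 := P*s1 + Q*s2). set (m32 := 1 - P*c1). set (m33 := 1 - Q*c2).
  assert (R1 : m11*A + m12*B = 0). { transitivity (P*(c1*A+s1*B) - A). unfold m11, m12; ring. rewrite H1; ring. }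
  assert (R2 : m21*A + m23*D = 0). { transitivity (Q*(c2*A+s2*D) - A). unfold m21, m23; ring. rewrite H2; ring. }
  assert (R3 : m31*A + m32*B + m33*D = 0). { rewrite <- H3. unfold m31, m32, m33. ring. }
  set (det := m11*(-(m23*m32)) + m12*(m23*m31 - m21*m33)).
  assert (dA : det * A = 0).
  { transitivity ((-(m23*m32))*(m11*A + m12*B) + (-(m12*m33))*(m21*A + m23*D) + (m12*m23)*(m31*A + m32*B + m33*D)).
    unfold det; ring. rewrite R1, R2, R3. ring. }
  assert (dB : det * B = 0).
  { transitivity ((m23*m31 - m21*m33)*(m11*A + m12*B) + (m11*m33)*(m21*A + m23*D) + (-(m11*m23))*(m31*A + m32*B + m33*D)).
    unfold det; ring. rewrite R1, R2, R3. ring. }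
  assert (dD : det * D = 0).
  { transitivity ((m21*m32)*(m11*A + m12*B) + (m12*m31 - m11*m32)*(m21*A + m23*D) + (-(m12*m21))*(m31*A + m32*B + m33*D)).
    unfold det; ring. rewrite R1, R2, R3. ring. }
  assert (d0 : det = 0).
  { destruct Hnz as [h|[h|h]]. exact (Cmul_cancel _ _ dA h). exact (Cmul_cancel _ _ dB h). exact (Cmul_cancel _ _ dD h). }
  assert (Hd : det = - (P*Q) * (2*(s1*c2 + c1*s2) - a*s2 - b*s1)
      + Q*s2*((P*P + 1 - a*P) + P*P*(c1*c1+s1*s1-1)) + P*s1*((Q*Q + 1 - b*Q) + Q*Q*(c2*c2+s2*s2-1))).
  { unfold det, m11, m12, m21, m23, m31, m32, m33. ring. }
  rewrite ha, hb, e1, e2, d0 in Hd.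
  apply (Cmul_cancel _ (- (P*Q))).
  - rewrite Cmult_comm. rewrite Hd. ring.
  - intro h. apply hP. apply (Cmul_cancel _ Q). 2: exact hQ.
    replace (P*Q) with (- - (P*Q)) by ring. rewrite h. ring.
Qed.

End Sec4.

Section Sec5.

Definition Hg (k : R) (A B : C) (x : R) : C :=
  Cplus (Cmult (RtoC (cos (k*x))) A) (Cmult (RtoC (sin (k*x))) B).

Lemma C_ext (x y : C) : fst x = fst y -> snd x = snd y -> x = y.
Proof. destruct x, y; simpl; intros; subst; reflexivity. Qed.

Lemma Hg_derive k A B x : is_derive (Hg k A B) x (Hg k (Cmult (RtoC k) B) (Copp (Cmult (RtoC k) A)) x).
Proof.
  destruct A as [a1 a2], B as [b1 b2].
  apply isd_C; unfold Hg; simpl; auto_derive; auto; ring.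
Qed.

Lemma Hg_0 k A B : Hg k A B 0 = A.
Proof. unfold Hg. rewrite Rmult_0_r, cos_0, sin_0. apply C_ext; simpl; ring. Qed.

Lemma ode_C (k l : R) (g g' g'' : R -> C) : k <> 0 ->
  (forall x, is_derive g x (g' x)) -> (forall x, is_derive g' x (g'' x)) ->
  (forall x, 0 <= x <= l -> Copp (g'' x) = Cmult (RtoC (k^2)) (g x)) ->
  forall x, 0 <= x <= l ->
    g x = Hg k (g 0) (Cmult (RtoC (/k)) (g' 0)) x /\
    g' x = Hg k (Cmult (RtoC k) (Cmult (RtoC (/k)) (g' 0))) (Copp (Cmult (RtoC k) (g 0))) x.
Proof.
  intros hk H1 H2 H3 x Hx.
  assert (U := ode_uniq k l (fun y => fst (g y)) (fun y => fst (g' y)) (fun y => fst (g'' y)) hk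
     (fun y => isd_fst _ _ _ (H1 y)) (fun y => isd_fst _ _ _ (H2 y))).
  assert (W := ode_uniq k l (fun y => snd (g y)) (fun y => snd (g' y)) (fun y => snd (g'' y)) hk
     (fun y => isd_snd _ _ _ (H1 y)) (fun y => isd_snd _ _ _ (H2 y))).
  assert (O1 : forall y, 0 <= y <= l -> fst (g'' y) = - (k^2 * fst (g y))).
  { intros y Hy. specialize (H3 y Hy). apply (f_equal fst) in H3. simpl in H3. lra. }
  assert (O2 : forall y, 0 <= y <= l -> snd (g'' y) = - (k^2 * snd (g y))).
  { intros y Hy. specialize (H3 y Hy). apply (f_equal snd) in H3. simpl in H3. lra. }
  destruct (U O1 x Hx) as [U1 U2]. destruct (W O2 x Hx) as [W1 W2].
  split; apply C_ext; unfold Hg; simpl; [rewrite U1 | rewrite W1 | rewrite U2 | rewrite W2]; field; exact hk.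
Qed.

End Sec5.

Section Sec6.

Lemma Sigma_eq n1 n2 l1 l2 s t k :
  Sigma n1 n2 l1 l2 s t k =
  Cmult (RtoC (2 * sin (k*(l1+l2)) - a_coef n1 s * sin (k*l2) - a_coef n2 t * sin (k*l1)))
        (Cmult (0, -1) (Cexpi (k*(l1+l2)))).
Proof.
  unfold Sigma. generalize (a_coef n1 s) (a_coef n2 t). intros a b.
  set (u := k*(l1+l2)).
  assert (e1 : Cexpi (k*l1) = Cexpi (u - k*l2)) by (f_equal; unfold u; ring).
  assert (e2 : Cexpi (k*l2) = Cexpi (u - k*l1)) by (f_equal; unfold u; ring).
  assert (e3 : Cexpi (k*(l1+2*l2)) = Cexpi (u + k*l2)) by (f_equal; unfold u; ring).
  assert (e4 : Cexpi (k*(2*l1+l2)) = Cexpi (u + k*l1)) by (f_equal; unfold u; ring).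
  assert (e5 : Cexpi (2*k*(l1+l2)) = Cexpi (2*u)) by (f_equal; unfold u; ring).
  rewrite e1, e2, e3, e4, e5.
  unfold Cexpi.
  rewrite !cos_minus, !sin_minus, !cos_plus, !sin_plus, cos_2a, sin_2a.
  pose proof (sin2_cos2 u). unfold Rsqr in *.
  apply C_ext; simpl; nra.
Qed.

End Sec6.

Section Sec7.

Lemma Cmul_neq0 (x y : C) : x <> RtoC 0 -> y <> RtoC 0 -> Cmult x y <> RtoC 0.
Proof. intros hx hy h. apply hx. exact (Cmul_cancel _ _ h hy). Qed.

Lemma prev_ph n1 n2 s t j1 j2 : (1 <= n1)%nat -> (1 <= n2)%nat -> (j1 < n1)%nat -> (j2 < n2)%nat ->
  Cconj (tau n1 n2 s t (prev n1 j1) j2) = Cmult (Cexpi (2 * PI * INR s / INR n1)) (Cconj (tau n1 n2 s t j1 j2)).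
Proof.
  intros h1 h2 hj1 hj2.
  transitivity (Cconj (tau n1 n2 s t ((j1 + (n1-1)) mod n1) ((j2 + 0) mod n2))).
  { unfold prev. rewrite Nat.add_0_r, (Nat.mod_small j2) by exact hj2.
    do 3 f_equal. lia. }
  rewrite ph_mod by lia. rewrite ph_P by lia. reflexivity.
Qed.

Lemma prev_ph2 n1 n2 s t j1 j2 : (1 <= n1)%nat -> (1 <= n2)%nat -> (j1 < n1)%nat -> (j2 < n2)%nat ->
  Cconj (tau n1 n2 s t j1 (prev n2 j2)) = Cmult (Cexpi (2 * PI * INR t / INR n2)) (Cconj (tau n1 n2 s t j1 j2)).
Proof.
  intros h1 h2 hj1 hj2.
  transitivity (Cconj (tau n1 n2 s t ((j1 + 0) mod n1) ((j2 + (n2 - 1)) mod n2))).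
  { unfold prev. rewrite Nat.add_0_r, (Nat.mod_small j1) by exact hj1.
    do 3 f_equal. lia. }
  rewrite ph_mod by lia. rewrite ph_Q by lia. reflexivity.
Qed.

Local Open Scope C_scope.

Lemma construct (n1 n2 : nat) (l1 l2 : R) (s t : nat) (k : R) (A B D : C) :
  (1 <= n1)%nat -> (1 <= n2)%nat -> k <> 0%R ->
  Cexpi (2 * PI * INR s / INR n1) * (RtoC (cos (k*l1)) * A + RtoC (sin (k*l1)) * B) = A ->
  Cexpi (2 * PI * INR t / INR n2) * (RtoC (cos (k*l2)) * A + RtoC (sin (k*l2)) * D) = A ->
  B - Cexpi (2 * PI * INR s / INR n1) * (RtoC (cos (k*l1)) * B - RtoC (sin (k*l1)) * A)
    + D - Cexpi (2 * PI * INR t / INR n2) * (RtoC (cos (k*l2)) * D - RtoC (sin (k*l2)) * A) = 0 ->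
  (exists d x, (0 <= x <= edge_len l1 l2 d)%R /\ Hg k A (if d then B else D) x <> 0) ->
  is_eigenvalue_Hst n1 n2 l1 l2 s t (k ^ 2).
Proof.
  intros h1 h2 hk E1 E2 E3 [dw [xw [Hxw Hw]]].
  set (P := Cexpi (2 * PI * INR s / INR n1)) in *.
  set (Q := Cexpi (2 * PI * INR t / INR n2)) in *.
  set (ph := fun j1 j2 : nat => Cconj (tau n1 n2 s t j1 j2)).
  exists (fun (d : bool) (j1 j2 : nat) (x : R) => ph j1 j2 * Hg k A (if d then B else D) x).
  exists (fun (d : bool) (j1 j2 : nat) (x : R) => ph j1 j2 * Hg k (RtoC k * (if d then B else D)) (- (RtoC k * A)) x).
  exists (fun (d : bool) (j1 j2 : nat) (x : R) => ph j1 j2 * Hg k (RtoC k * (- (RtoC k * A))) (- (RtoC k * (RtoC k * (if d then B else D)))) x).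
  split; [|split; [|split]].
  - intros d j1 j2 _ _. split; [|split].
    + intro x. apply isd_Cmult_l. apply Hg_derive.
    + intro x. apply isd_Cmult_l.
      eapply is_derive_ext; [|apply Hg_derive]. intro y. reflexivity.
    + intros x _. replace (RtoC (k^2)) with (RtoC k * RtoC k).
      * unfold Hg. ring.
      * apply C_ext; simpl; ring.
  - intros j1 j2 hj1 hj2.
    assert (p1 : ph (prev n1 j1) j2 = P * ph j1 j2) by (exact (prev_ph n1 n2 s t j1 j2 h1 h2 hj1 hj2)).
    assert (p2 : ph j1 (prev n2 j2) = Q * ph j1 j2) by (exact (prev_ph2 n1 n2 s t j1 j2 h1 h2 hj1 hj2)).
    cbv beta.
    rewrite p1, p2, !Hg_0.
    split; [|split; [|split]].
    + transitivity (ph j1 j2 * (P * (RtoC (cos (k*l1)) * A + RtoC (sin (k*l1)) * B))).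
      unfold Hg; ring. rewrite E1; ring.
    + reflexivity.
    + transitivity (ph j1 j2 * (Q * (RtoC (cos (k*l2)) * A + RtoC (sin (k*l2)) * D))).
      unfold Hg; ring. rewrite E2; ring.
    + transitivity (ph j1 j2 * RtoC k * (B - P * (RtoC (cos (k*l1)) * B - RtoC (sin (k*l1)) * A)
        + D - Q * (RtoC (cos (k*l2)) * D - RtoC (sin (k*l2)) * A))).
      unfold Hg; ring. rewrite E3; ring.
  - intros kappa iota d j1 j2 x hk1 hi1 hj1 hj2. unfold ph.
    rewrite ph_mod by lia. ring.
  - exists dw, 0%nat, 0%nat, xw. split; [lia|split; [lia|split; [exact Hxw|]]].
    apply Cmul_neq0. apply ph_neq0. exact Hw.
Qed.

End Sec7.

Section Sec8.

Lemma sin_witness k l : k <> 0 -> 0 < l -> exists x, 0 <= x <= l /\ sin (k*x) <> 0.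
Proof.
  intros hk hl.
  assert (ha : 0 < Rabs k) by (apply Rabs_pos_lt; exact hk).
  set (x := Rmin l (/ (2 * Rabs k))).
  assert (hx0 : 0 < x). { unfold x. apply Rmin_glb_lt; [lra|]. apply Rinv_0_lt_compat. lra. }
  assert (hxl : x <= l) by apply Rmin_l.
  assert (hx2 : x <= / (2 * Rabs k)) by apply Rmin_r.
  assert (hkx : Rabs k * x <= / 2).
  { apply (Rmult_le_compat_l (Rabs k)) in hx2; [|lra]. 
    replace (Rabs k * / (2 * Rabs k)) with (/2) in hx2 by (field; lra). exact hx2. }
  pose proof PI2_1.
  exists x. split; [lra|].
  destruct (Rlt_or_le 0 k) as [kp|kn].
  - rewrite Rabs_pos_eq in hkx by lra. apply Rgt_not_eq. apply sin_gt_0; nra.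
  - rewrite Rabs_left1 in hkx by lra.
    replace (k*x) with (- (-k*x)) by ring. rewrite sin_neg.
    assert (0 < sin (-k*x)) by (apply sin_gt_0; nra). lra.
Qed.

Lemma RtoC_neq0 r : r <> 0 -> RtoC r <> RtoC 0.
Proof. intros h e. apply h. injection e. auto. Qed.

Lemma Hg_sin k B x : Hg k (RtoC 0) B x = Cmult (RtoC (sin (k*x))) B.
Proof. unfold Hg. apply C_ext; simpl; ring. Qed.

Lemma wit_sin k l B : k <> 0 -> 0 < l -> B <> RtoC 0 ->
  exists x, 0 <= x <= l /\ Hg k (RtoC 0) B x <> RtoC 0.
Proof.
  intros hk hl hB. destruct (sin_witness k l hk hl) as [x [hx hs]].
  exists x. split; [exact hx|]. rewrite Hg_sin. apply Cmul_neq0; [apply RtoC_neq0|]; assumption.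
Qed.

Lemma trig_rel y : Cplus (Cmult (RtoC (cos y)) (RtoC (cos y))) (Cmult (RtoC (sin y)) (RtoC (sin y))) = RtoC 1.
Proof. pose proof (sin2_cos2 y). unfold Rsqr in *. apply C_ext; simpl; lra. Qed.

Local Open Scope C_scope.

Lemma alg_generic (P Q c1 s1 c2 s2 a b : C) :
  a*P = P*P + 1 -> b*Q = Q*Q + 1 -> c1*c1+s1*s1 = 1 -> c2*c2+s2*s2 = 1 ->
  2*(s1*c2 + c1*s2) - a*s2 - b*s1 = 0 -> P <> 0 -> Q <> 0 -> s1 <> 0 -> s2 <> 0 ->
  let A := RtoC 1 in let B := (1 - P*c1)/(P*s1) in let D := (1 - Q*c2)/(Q*s2) in
  P*(c1*A + s1*B) = A /\ Q*(c2*A + s2*D) = A /\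
  B - P*(c1*B - s1*A) + D - Q*(c2*D - s2*A) = 0.
Proof.
  intros ha hb e1 e2 hD hP hQ hs1 hs2 A B D.
  split; [|split].
  - unfold A, B. field. auto.
  - unfold A, D. field. auto.
  - apply (Cmul_cancel _ (P*Q*s1*s2)).
    + transitivity (- (P*Q) * (2*(s1*c2 + c1*s2) - a*s2 - b*s1)
        + Q*s2*((P*P + 1 - a*P) + P*P*(c1*c1+s1*s1-1)) + P*s1*((Q*Q + 1 - b*Q) + Q*Q*(c2*c2+s2*s2-1))).
      * unfold A, B, D. field. auto.
      * rewrite ha, hb, e1, e2, hD. ring.
    + repeat apply Cmul_neq0; auto.
Qed.

End Sec8.

Section Sec9.

Lemma Pc1_lem (th y : R) : 2 * cos th = 2 * cos y -> sin y = 0 -> Cmult (Cexpi th) (RtoC (cos y)) = RtoC 1.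
Proof.
  intros h1 h2. pose proof (sin2_cos2 y). pose proof (sin2_cos2 th). unfold Rsqr in *.
  assert (cth : cos th = cos y) by lra.
  assert (sth : sin th = 0) by (rewrite cth in H0; nra).
  unfold Cexpi. apply C_ext; simpl; rewrite ?cth, ?sth; nra.
Qed.

Local Open Scope C_scope.

Lemma exists_sol (n1 n2 : nat) (l1 l2 : R) (s t : nat) (k : R) :
  k <> 0%R -> (0 < l1)%R -> (0 < l2)%R ->
  (2 * sin (k*(l1+l2)) - a_coef n1 s * sin (k*l2) - a_coef n2 t * sin (k*l1) = 0)%R ->
  exists A B D : C,
  Cexpi (2 * PI * INR s / INR n1) * (RtoC (cos (k*l1)) * A + RtoC (sin (k*l1)) * B) = A /\
  Cexpi (2 * PI * INR t / INR n2) * (RtoC (cos (k*l2)) * A + RtoC (sin (k*l2)) * D) = A /\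
  B - Cexpi (2 * PI * INR s / INR n1) * (RtoC (cos (k*l1)) * B - RtoC (sin (k*l1)) * A)
    + D - Cexpi (2 * PI * INR t / INR n2) * (RtoC (cos (k*l2)) * D - RtoC (sin (k*l2)) * A) = 0 /\
  (exists d x, (0 <= x <= edge_len l1 l2 d)%R /\ Hg k A (if d then B else D) x <> 0).
Proof.
  intros hk hl1 hl2 HD.
  assert (hsum : sin (k*(l1+l2)) = (sin (k*l1) * cos (k*l2) + cos (k*l1) * sin (k*l2))%R).
  { rewrite <- sin_plus. f_equal. ring. }
  rewrite hsum in HD.
  set (P := Cexpi (2 * PI * INR s / INR n1)) in *.
  set (Q := Cexpi (2 * PI * INR t / INR n2)) in *.
  assert (ha : RtoC (a_coef n1 s) * P = P*P + 1) by (unfold a_coef, P; apply Cexpi_rel).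
  assert (hb : RtoC (a_coef n2 t) * Q = Q*Q + 1) by (unfold a_coef, Q; apply Cexpi_rel).
  assert (hP : P <> 0) by apply Cexpi_neq0.
  assert (hQ : Q <> 0) by apply Cexpi_neq0.
  pose proof (trig_rel (k*l1)) as e1. pose proof (trig_rel (k*l2)) as e2.
  set (C1 := cos (k*l1)) in *. set (S1 := sin (k*l1)) in *.
  set (C2 := cos (k*l2)) in *. set (S2 := sin (k*l2)) in *.
  set (a := a_coef n1 s) in *. set (b := a_coef n2 t) in *.
  assert (hDc : 2*(RtoC S1*RtoC C2 + RtoC C1*RtoC S2) - RtoC a*RtoC S2 - RtoC b*RtoC S1 = 0).
  { apply C_ext; simpl; lra. }
  destruct (Req_dec S1 0) as [s10|s10]; destruct (Req_dec S2 0) as [s20|s20].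
  -
    destruct (classic (P * RtoC C1 = 1)) as [pc|pc].
    + exists (RtoC 0), (RtoC 1), (RtoC 0). rewrite s10, s20.
      split; [ring|split; [ring|split]].
      * transitivity (1 - P * RtoC C1). ring. rewrite pc. ring.
      * destruct (wit_sin k l1 (RtoC 1) hk hl1) as [x [hx hw]].
        { intro h. injection h. lra. }
        exists true, x. simpl. auto.
    + exists (RtoC 0), (1 - Q * RtoC C2), (P * RtoC C1 - 1). rewrite s10, s20.
      split; [ring|split; [ring|split]].
      * ring.
      * destruct (wit_sin k l2 (P * RtoC C1 - 1) hk hl2) as [x [hx hw]].
        { intro h. apply pc. transitivity (P * RtoC C1 - 1 + 1). ring. rewrite h. ring. }
        exists false, x. simpl. auto.
  -
    assert (pc : P * RtoC C1 = 1).
    { unfold P, C1. apply Pc1_lem; [|exact s10].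
      fold C1. rewrite s10 in HD. 
      assert (S2 * (2 * C1 - a) = 0)%R by lra.
      apply Rmult_integral in H. destruct H as [H|H]; [contradiction|]. unfold a, a_coef in H. lra. }
    exists (RtoC 0), (RtoC 1), (RtoC 0). rewrite s10.
    split; [ring|split; [ring|split]].
    * transitivity (1 - P * RtoC C1). ring. rewrite pc. ring.
    * destruct (wit_sin k l1 (RtoC 1) hk hl1) as [x [hx hw]].
      { intro h. injection h. lra. }
      exists true, x. simpl. auto.
  -
    assert (qc : Q * RtoC C2 = 1).
    { unfold Q, C2. apply Pc1_lem; [|exact s20].
      fold C2. rewrite s20 in HD.
      assert (S1 * (2 * C2 - b) = 0)%R by lra.
      apply Rmult_integral in H. destruct H as [H|H]; [contradiction|]. unfold b, a_coef in H. lra. }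
    exists (RtoC 0), (RtoC 0), (RtoC 1). rewrite s20.
    split; [ring|split; [ring|split]].
    * transitivity (1 - Q * RtoC C2). ring. rewrite qc. ring.
    * destruct (wit_sin k l2 (RtoC 1) hk hl2) as [x [hx hw]].
      { intro h. injection h. lra. }
      exists false, x. simpl. auto.
  -
    destruct (alg_generic P Q (RtoC C1) (RtoC S1) (RtoC C2) (RtoC S2) (RtoC a) (RtoC b) ha hb e1 e2 hDc hP hQ
       (RtoC_neq0 _ s10) (RtoC_neq0 _ s20)) as [E1 [E2 E3]].
    eexists; eexists; eexists. split; [exact E1|split; [exact E2|split; [exact E3|]]].
    exists true, 0%R. simpl. split; [lra|]. rewrite Hg_0. intro h. injection h. lra.
Qed.

End Sec9.

Lemma kinv k : k <> 0 -> Cmult (RtoC k) (RtoC (/k)) = RtoC 1.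
Proof. intro hk. apply C_ext; simpl; field; exact hk. Qed.

Lemma Hg_nz k A B x : Hg k A B x <> RtoC 0 -> A <> RtoC 0 \/ B <> RtoC 0.
Proof.
  intro h. destruct (classic (A = RtoC 0)) as [hA|hA]; [|left; exact hA].
  right. intro hB. apply h. rewrite hA, hB. unfold Hg. apply C_ext; simpl; ring.
Qed.

Theorem mainTheorem4 (n1 n2 : nat) (l1 l2 : R) (s t : nat) (k : R)
  (hn1 : (3 <= n1)%nat) (hn2 : (3 <= n2)%nat)
  (hl1 : 0 < l1) (hl2 : 0 < l2)
  (hs : (s < n1)%nat) (ht : (t < n2)%nat)
  (hk : k <> 0) :
  is_eigenvalue_Hst n1 n2 l1 l2 s t (k ^ 2) <-> Sigma n1 n2 l1 l2 s t k = RtoC 0.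
Proof.
  rewrite Sigma_eq.
  set (w := Cmult (0, -1) (Cexpi (k*(l1+l2)))).
  assert (hw : w <> RtoC 0).
  { apply Cmul_neq0. intro h. injection h. lra. apply Cexpi_neq0. }
  assert (hsum : sin (k*(l1+l2)) = (sin (k*l1) * cos (k*l2) + cos (k*l1) * sin (k*l2))%R).
  { rewrite <- sin_plus. f_equal. ring. }
  split.
  - intros [f [f' [f'' [Hee [Hsc [HF Hnz]]]]]].
    set (ph := fun j1 j2 : nat => Cconj (tau n1 n2 s t j1 j2)).
    assert (rel : forall d kappa iota x, (kappa < n1)%nat -> (iota < n2)%nat ->
               f d kappa iota x = Cmult (ph kappa iota) (f d 0%nat 0%nat x)).
    { intros d kappa iota x h1 h2. pose proof (HF kappa iota d 0%nat 0%nat x h1 h2 ltac:(lia) ltac:(lia)) as H.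
      rewrite !Nat.add_0_l, !Nat.mod_small in H by assumption. exact H. }
    assert (rel' : forall d kappa iota x, (kappa < n1)%nat -> (iota < n2)%nat ->
               f' d kappa iota x = Cmult (ph kappa iota) (f' d 0%nat 0%nat x)).
    { intros d kappa iota x h1 h2.
      apply (isd_unique (f d kappa iota) x).
      - exact (proj1 (Hee d kappa iota h1 h2) x).
      - apply (is_derive_ext (fun y => Cmult (ph kappa iota) (f d 0%nat 0%nat y))).
        + intro y. symmetry. apply rel; assumption.
        + apply isd_Cmult_l. exact (proj1 (Hee d 0%nat 0%nat ltac:(lia) ltac:(lia)) x). }
    assert (pv1 : prev n1 0 = (n1 - 1)%nat) by (unfold prev; simpl; apply Nat.mod_small; lia).
    assert (pv2 : prev n2 0 = (n2 - 1)%nat) by (unfold prev; simpl; apply Nat.mod_small; lia).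
    destruct (Hsc 0%nat 0%nat ltac:(lia) ltac:(lia)) as [SC1 [SC2 [SC3 SC4]]].
    rewrite pv1, pv2 in *.
    rewrite (rel true (n1-1)%nat 0%nat l1) in SC1 by lia. rewrite (rel false 0%nat (n2-1)%nat l2) in SC3 by lia.
    rewrite (rel' true (n1-1)%nat 0%nat l1) in SC4 by lia. rewrite (rel' false 0%nat (n2-1)%nat l2) in SC4 by lia.
    assert (eP : ph (n1 - 1)%nat 0%nat = Cexpi (2 * PI * INR s / INR n1)) by (apply ph_P; lia).
    assert (eQ : ph 0%nat (n2 - 1)%nat = Cexpi (2 * PI * INR t / INR n2)) by (apply ph_Q; lia).
    rewrite eP in SC1, SC4. rewrite eQ in SC3, SC4.
    set (P := Cexpi (2 * PI * INR s / INR n1)) in *.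
    set (Q := Cexpi (2 * PI * INR t / INR n2)) in *.
    assert (ODE : forall d x, 0 <= x <= edge_len l1 l2 d ->
       f d 0%nat 0%nat x = Hg k (f d 0%nat 0%nat 0) (Cmult (RtoC (/k)) (f' d 0%nat 0%nat 0)) x /\
       f' d 0%nat 0%nat x = Hg k (Cmult (RtoC k) (Cmult (RtoC (/k)) (f' d 0%nat 0%nat 0))) (Copp (Cmult (RtoC k) (f d 0%nat 0%nat 0))) x).
    { intros d x hx. destruct (Hee d 0%nat 0%nat ltac:(lia) ltac:(lia)) as [D1 [D2 D3]].
      exact (ode_C k _ _ _ _ hk D1 D2 D3 x hx). }
    set (A := f true 0%nat 0%nat 0).
    set (B := Cmult (RtoC (/k)) (f' true 0%nat 0%nat 0)).
    set (D := Cmult (RtoC (/k)) (f' false 0%nat 0%nat 0)).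
    assert (fB : f' true 0%nat 0%nat 0 = Cmult (RtoC k) B).
    { unfold B. rewrite Cmult_assoc, kinv by exact hk. apply C_ext; simpl; ring. }
    assert (fD : f' false 0%nat 0%nat 0 = Cmult (RtoC k) D).
    { unfold D. rewrite Cmult_assoc, kinv by exact hk. apply C_ext; simpl; ring. }
    destruct (ODE true l1 ltac:(simpl; lra)) as [O1 O1'].
    destruct (ODE false l2 ltac:(simpl; lra)) as [O2 O2'].
    fold A B in O1, O1'. fold D in O2, O2'. rewrite SC2 in O2, O2'. fold A in O2, O2'.
    rewrite O1 in SC1. rewrite O2 in SC3. rewrite O1', O2', fB, fD in SC4.
    fold A in SC1, SC3.
    assert (E1 : Cmult P (Cplus (Cmult (RtoC (cos (k*l1))) A) (Cmult (RtoC (sin (k*l1))) B)) = A)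
      by (rewrite <- SC1 at 2; unfold Hg; reflexivity).
    assert (E2 : Cmult Q (Cplus (Cmult (RtoC (cos (k*l2))) A) (Cmult (RtoC (sin (k*l2))) D)) = A)
      by (rewrite <- SC3 at 2; unfold Hg; reflexivity).
    assert (E3 : (B - P*(RtoC (cos (k*l1))*B - RtoC (sin (k*l1))*A) + D - Q*(RtoC (cos (k*l2))*D - RtoC (sin (k*l2))*A))%C = RtoC 0).
    { apply (Cmul_cancel _ (RtoC k)); [|apply RtoC_neq0; exact hk].
      rewrite <- SC4. unfold Hg. ring. }
    assert (NZ : A <> RtoC 0 \/ B <> RtoC 0 \/ D <> RtoC 0).
    { destruct Hnz as [d [j1 [j2 [x [hj1 [hj2 [hx hf]]]]]]].
      rewrite rel in hf by assumption.
      assert (hf0 : f d 0%nat 0%nat x <> RtoC 0).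
      { intro h. apply hf. rewrite h. apply C_ext; simpl; ring. }
      rewrite (proj1 (ODE d x hx)) in hf0.
      destruct d; apply Hg_nz in hf0.
      - fold A B in hf0. tauto.
      - rewrite SC2 in hf0. fold A D in hf0. tauto. }
    pose proof (alg_fwd P Q A B D (RtoC (cos (k*l1))) (RtoC (sin (k*l1))) (RtoC (cos (k*l2))) (RtoC (sin (k*l2)))
       (RtoC (a_coef n1 s)) (RtoC (a_coef n2 t))
       ltac:(unfold a_coef, P; apply Cexpi_rel) ltac:(unfold a_coef, Q; apply Cexpi_rel)
       (trig_rel _) (trig_rel _) E1 E2 E3 NZ (Cexpi_neq0 _) (Cexpi_neq0 _)) as HD.
    apply (f_equal fst) in HD. simpl in HD.
    rewrite hsum.
    replace (2 * (sin (k * l1) * cos (k * l2) + cos (k * l1) * sin (k * l2)) -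
        a_coef n1 s * sin (k * l2) - a_coef n2 t * sin (k * l1)) with 0 by lra.
    apply C_ext; simpl; ring.
  - intro HS.
    assert (HD : RtoC (2 * sin (k * (l1 + l2)) - a_coef n1 s * sin (k * l2) - a_coef n2 t * sin (k * l1)) = RtoC 0)
      by exact (Cmul_cancel _ _ HS hw).
    injection HD as HD.
    rewrite hsum in HD.
    destruct (exists_sol n1 n2 l1 l2 s t k hk hl1 hl2 ltac:(rewrite hsum; exact HD)) as [A [B [D [E1 [E2 [E3 W]]]]]].
    apply (construct n1 n2 l1 l2 s t k A B D); auto; lia.
Qed.
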